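(* Let $G$ and $H$ be two connected graphs of order $n$ with equal Laplacian spectrum. If $Z(G)\neq Z(H)$, then for every $k\geq 1$, $\vee_k G$ and $\vee_k H$ have equal Laplacian spectrum and $Z(\vee_k G)\neq Z(\vee_k H)$. Likewise, if $Z_{-}(G)\neq Z_{-}(H)$, then for every $k\geq 1$, $\vee_k G$ and $\vee_k H$ have equal Laplacian spectrum and $Z_{-}(\vee_k G)\neq Z_{-}(\vee_k H)$.
   Context: Graphs are finite, simple, undirected. The Laplacian matrix of $G$ is $L=D-A$ ($D$ the diagonal degree matrix, $A$ the adjacency matrix). The join $G\vee H$ is the disjoint union of $G$ and $H$ together with all edges $\{u,v\}$, $u\in V(G)$, $v\in V(H)$. For a connected graph $G$, define $\vee_0 G=G$ and $\vee_{k+1}G=(\vee_k G)\vee G$ for $k\geq 0$ (using a fresh copy of $G$ each time). The zero forcing number $Z(G)$ is the minimum size of a set $S\subseteq V(G)$ such that, if the vertices of $S$ are colored blue and all others white, repeated application of the rule ''a blue vertex with exactly one white neighbor forces that neighbor to become blue'' eventually makes every vertex blue. The skew zero forcing number $Z_{-}(G)$ is defined in the same way but with the rule ''any vertex (blue or white) that has exactly one white neighbor forces that neighbor to become blue''. *)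

(* Defs.v *)
From HB Require Import structures.
From mathcomp Require Import all_boot all_order all_algebra all_field.
Unset Printing Implicit Defensive.
Import Order.TTheory GRing.Theory Num.Theory.

Definition simple_graph {T : finType} (e : rel T) : Prop :=
  symmetric e /\ irreflexive e.

Definition connected_graph {T : finType} (e : rel T) : Prop :=
  forall x y : T, connect e x y.

Definition gjoin {T1 T2 : finType} (e1 : rel T1) (e2 : rel T2) : rel (T1 + T2)%type :=
  fun x y => match x, y with
             | inl a, inl b => e1 a b
             | inr a, inr b => e2 a b
             | _, _ => true
             end.

(* Vertex type of vee_k G, and vee_k G itself: vee_0 G = G, vee_{k+1} G = (vee_k G) v G. *)
Fixpoint vtype (T : finType) (k : nat) : finType :=
  match k with
  | 0 => T
  | k'.+1 => (vtype T k' + T)%type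
  end.

Fixpoint iter_join {T : finType} (e : rel T) (k : nat) : rel (vtype T k) :=
  match k return rel (vtype T k) with
  | 0 => e
  | k'.+1 => gjoin (@iter_join T e k') e
  end.

Local Open Scope ring_scope.
Definition laplacian {T : finType} (e : rel T) : 'M[algC]_#|T| :=
  \matrix_(i, j)
    ((i == j)%:R * (#|[set w | e (enum_val i) w]|)%:R
     - (e (enum_val i) (enum_val j))%:R).
Local Close Scope ring_scope.

(* Laplacian spectrum: the multiset of eigenvalues (with algebraic
   multiplicity), i.e. the multiplicity function x |-> mult. of x as a root
   of the characteristic polynomial of L. *)
Definition lap_spectrum {T : finType} (e : rel T) : algC -> nat :=
  fun x => mup x (char_poly (laplacian e)).

Definition zf_step {T : finType} (e : rel T) (B B' : {set T}) : bool :=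
  [exists u, exists v,
    [&& u \in B, v \notin B, e u v,
        #|[set w | e u w & w \notin B]| == 1 & B' == v |: B]].

Definition szf_step {T : finType} (e : rel T) (B B' : {set T}) : bool :=
  [exists u, exists v,
    [&& v \notin B, e u v,
        #|[set w | e u w & w \notin B]| == 1 & B' == v |: B]].

Definition zero_forcing_set {T : finType} (e : rel T) (S : {set T}) : bool :=
  connect (zf_step e) S setT.

Definition skew_zero_forcing_set {T : finType} (e : rel T) (S : {set T}) : bool :=
  connect (szf_step e) S setT.

(* Minimum size of such a set (setT always qualifies, so #|T| is a valid default). *)
Definition Zf {T : finType} (e : rel T) : nat :=
  \big[minn/#|T|]_(S : {set T} | zero_forcing_set e S) #|S|.

Definition Zskew {T : finType} (e : rel T) : nat :=
  \big[minn/#|T|]_(S : {set T} | skew_zero_forcing_set e S) #|S|.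

(* Main.v *)
Require Import Defs.
From mathcomp Require Import all_boot all_order all_algebra all_field.
From mathcomp Require Import zify ring.
From Stdlib Require Import FunctionalExtensionality.
Set Implicit Arguments. Unset Strict Implicit. Unset Printing Implicit Defensive.

Section ZF.
Variable sk : bool.

Definition fstep {T : finType} (e : rel T) (B B' : {set T}) : bool :=
  [exists u, exists v, [&& sk || (u \in B), v \notin B, e u v,
        #|[set w | e u w & w \notin B]| == 1 & B' == v |: B]].

Definition isZF {T : finType} (e : rel T) (S : {set T}) := connect (fstep e) S setT.
Definition Zg {T : finType} (e : rel T) : nat :=
  \big[minn/#|T|]_(S : {set T} | isZF e S) #|S|.

Variable T : finType.
Implicit Types (e : rel T) (B S : {set T}).

Lemma fstepP e B B' : reflect (exists u v, [/\ sk || (u \in B), v \notin B, e u v,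
        #|[set w | e u w & w \notin B]| = 1 & B' = v |: B]) (fstep e B B').
Proof.
apply: (iffP existsP) => [[u /existsP[v /and5P[h1 h2 h3 /eqP h4 /eqP h5]]]|[u [v [h1 h2 h3 h4 h5]]]].
  by exists u, v.
by exists u; apply/existsP; exists v; rewrite h1 h2 h3 h4 h5 !eqxx.
Qed.

Lemma isZF_step e B B' : fstep e B B' -> isZF e B' -> isZF e B.
Proof. by move=> h1 h2; apply: connect_trans (connect1 h1) h2. Qed.

Lemma isZFT e : isZF e setT.
Proof. exact: connect0. Qed.

Lemma big_minn_le (I : eqType) (r : seq I) (P : pred I) (F : I -> nat) d j :
  j \in r -> P j -> \big[minn/d]_(i <- r | P i) F i <= F j.
Proof.
elim: r => [//|x r IH]; rewrite inE big_cons => /orP[/eqP <- -> | jr Pj].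
  exact: geq_minl.
case: (P x); last exact: IH.
by apply: leq_trans (geq_minr _ _) (IH jr Pj).
Qed.

Lemma Zg_le e S : isZF e S -> Zg e <= #|S|.
Proof. by move=> h; apply: big_minn_le => //; rewrite mem_index_enum. Qed.

Lemma Zg_ex e : exists S, isZF e S /\ #|S| = Zg e.
Proof.
rewrite /Zg; elim/big_ind: _.
- by exists setT; split; [exact: isZFT | rewrite cardsT].
- move=> x y [S [h1 h2]] [S' [h1' h2']]; rewrite /minn.
  by case: ifP => _; [exists S | exists S'].
- by move=> S h; exists S.
Qed.

Lemma one_white e B w z : (forall x, (x \in B) = (x != w)) -> e z w -> ~~ e z z -> isZF e B.
Proof.
move=> hB hzw hzz.
have wB : w \notin B by rewrite hB eqxx.
have zB : z \in B by rewrite hB; apply: contraNneq hzz => zw; rewrite {2}zw.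
apply: (@isZF_step _ _ (w |: B)); last first.
  have -> : w |: B = setT by apply/setP => x; rewrite !inE hB; case: (x == w).
  exact: isZFT.
apply/fstepP; exists z, w; split => //; first by rewrite zB orbT.
have -> : [set x | e z x & x \notin B] = [set w].
  by apply/setP => x; rewrite !inE hB negbK; case: (eqVneq x w) => [->|]; rewrite ?hzw ?andbF.
by rewrite cards1.
Qed.

Lemma two_white e B w1 w2 z m : (forall x, (x \in B) = (x != w1) && (x != w2)) ->
  w1 != w2 -> sk || (z \in B) -> e z w1 -> ~~ e z w2 ->
  e m w2 -> ~~ e m m -> isZF e B.
Proof.
move=> hB n12 hz e1 e2 hm hmm.
apply: (@isZF_step _ _ (w1 |: B)).
  apply/fstepP; exists z, w1; split => //; first by rewrite hB eqxx.
  have -> : [set x | e z x & x \notin B] = [set w1] => //; last by rewrite cards1.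
  apply/setP => x; rewrite !inE hB negb_and !negbK.
  case: (eqVneq x w1) => [->|]; first by rewrite e1.
  by case: (eqVneq x w2) => [->|] //; rewrite ?(negbTE e2) ?andbF ?andbT.
apply: (one_white (w := w2) (z := m)) => // x; rewrite !inE hB.
by case: (eqVneq x w1) => [->|] //=; rewrite ?eqxx ?(negbTE n12) ?andbT //.
Qed.

End ZF.

Lemma Zf_Zg (T : finType) (e : rel T) : Zf e = Zg false e.
Proof. by []. Qed.
Lemma Zskew_Zg (T : finType) (e : rel T) : Zskew e = Zg true e.
Proof. by []. Qed.

Definition noiso {T : finType} (e : rel T) := forall x, exists y, e x y.

Lemma card_C2 (T : finType) (a b : T) : a != b -> #|~: [set a; b]| = #|T| - 2.
Proof.
move=> ab; have := cardsC [set a; b]; rewrite cards2 ab => <-.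
by rewrite addKn.
Qed.

Lemma Zle2_sk (T : finType) (e : rel T) u v : symmetric e -> irreflexive e -> e u v ->
  Zg true e <= #|T| - 2.
Proof.
move=> sy ir euv.
have vu : v != u by apply: contraTneq euv => ->; rewrite ir.
rewrite -(card_C2 vu); apply: Zg_le.
apply: (two_white (w1 := v) (w2 := u) (z := u) (m := v)) => //.
- by move=> x; rewrite !inE negb_or.
- by rewrite ir.
- by rewrite sy.
- by rewrite ir.
Qed.

Lemma Zle2_blue sk (T : finType) (e : rel T) z p m : symmetric e -> irreflexive e ->
  noiso e -> z != p -> ~~ e z p -> e p m -> Zg sk e <= #|T| - 2.
Proof.
move=> sy ir ni zp ezp epm.
have pm : p != m by apply: contraTneq epm => ->; rewrite ir.
case Emz: (e m z).
- have mz : m != z by apply: contraTneq Emz => ->; rewrite ir.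
  rewrite -(card_C2 pm); apply: Zg_le.
  have hB : forall x, (x \in ~: [set p; m]) = (x != m) && (x != p).
    by move=> x; rewrite !inE negb_or andbC.
  have n12 : m != p by rewrite eq_sym.
  have hz : sk || (z \in ~: [set p; m]) by rewrite hB eq_sym mz zp orbT.
  have e1 : e z m by rewrite sy.
  have e2 : e m p by rewrite sy.
  exact: (two_white hB n12 hz e1 ezp e2 (negbT (ir m))).
- have [y ezy] := ni z.
  rewrite -(card_C2 zp); apply: Zg_le.
  have hB : forall x, (x \in ~: [set z; p]) = (x != p) && (x != z).
    by move=> x; rewrite !inE negb_or andbC.
  have n12 : p != z by rewrite eq_sym.
  have mz : m != z by apply: contraNneq ezp => <-; rewrite sy.
  have hz : sk || (m \in ~: [set z; p]) by rewrite hB mz eq_sym pm orbT.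
  have e1 : e m p by rewrite sy.
  have e2 : ~~ e m z by rewrite Emz.
  have e3 : e y z by rewrite sy.
  exact: (two_white hB n12 hz e1 e2 e3 (negbT (ir y))).
Qed.

Section Iso.
Variable sk : bool.
Variables (T T' : finType) (e : rel T) (e' : rel T') (f : T -> T') (g : T' -> T).
Hypotheses (fK : cancel f g) (gK : cancel g f) (hom : forall x y, e' (f x) (f y) = e x y).

Lemma iso_step S S1 : fstep sk e' S S1 -> fstep sk e (f @^-1: S) (f @^-1: S1).
Proof.
case/fstepP => u [v [h1 h2 h3 h4 ->]]; apply/fstepP; exists (g u), (g v).
have finj : injective f := can_inj fK.
split.
- by rewrite inE gK.
- by rewrite inE gK.
- by rewrite -(hom (g u) (g v)) !gK.
- have -> : [set w | e (g u) w & w \notin f @^-1: S] = g @: [set w | e' u w & w \notin S].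
    by rewrite (can2_imset_pre _ gK fK); apply/setP => x; rewrite !inE -(hom (g u) x) gK.
  by rewrite (card_imset _ (can_inj gK)).
- by apply/setP => x; rewrite !inE (can2_eq fK gK).
Qed.

Lemma iso_ZF S : isZF sk e' S -> isZF sk e (f @^-1: S).
Proof.
case/connectP => p; elim: p S => [|S1 p IH] S /=.
  by move=> _ <-; rewrite preimsetT; apply: isZFT.
case/andP => st pth lst; apply: isZF_step (iso_step st) _; exact: IH.
Qed.
End Iso.

Section Join.
Variable sk : bool.
Variables (T1 T2 : finType) (eA : rel T1) (eB : rel T2).
Local Notation J := (gjoin eA eB).

Lemma card_sumP (P : pred (T1 + T2)) :
  #|[set w | P w]| = #|[set a | P (inl a)]| + #|[set b | P (inr b)]|.
Proof. by rewrite !cardsE -!sum1_card big_sumType. Qed.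

Definition projA (S : {set T1 + T2}) : {set T1} := [set a | inl a \in S].
Definition projB (S : {set T1 + T2}) : {set T2} := [set b | inr b \in S].

Lemma card_proj (S : {set T1 + T2}) : #|S| = #|projA S| + #|projB S|.
Proof.
have E : S = [set w | w \in S] by apply/setP => x; rewrite inE.
by rewrite {1}E card_sumP.
Qed.

Lemma whl a (B : {set T1 + T2}) : #|[set w | J (inl a) w & w \notin B]| =
  #|[set a' | eA a a' & inl a' \notin B]| + #|[set b | inr b \notin B]|.
Proof. by rewrite card_sumP. Qed.

Lemma whr b (B : {set T1 + T2}) : #|[set w | J (inr b) w & w \notin B]| =
  #|[set a | inl a \notin B]| + #|[set b' | eB b b' & inr b' \notin B]|.
Proof. by rewrite card_sumP. Qed.

Definition liftA (R : {set T1}) : {set T1 + T2} :=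
  [set x | if x is inl a then a \in R else true].

Lemma lift_step R R1 : fstep sk eA R R1 -> fstep sk J (liftA R) (liftA R1).
Proof.
case/fstepP => u [v [h1 h2 h3 h4 ->]]; apply/fstepP; exists (inl u), (inl v).
split; rewrite ?inE //.
- have e1 : [set a' | eA u a' & inl a' \notin liftA R] = [set w | eA u w & w \notin R].
    by apply/setP => x; rewrite !inE.
  have e2 : [set b | inr b \notin liftA R] = set0.
    by apply/setP => x; rewrite !inE.
  by rewrite whl e1 e2 cards0 addn0.
- by apply/setP => -[x|x]; rewrite !inE.
Qed.

Lemma lift_ZF R : isZF sk eA R -> isZF sk J (liftA R).
Proof.
case/connectP => p; elim: p R => [|S1 p IH] S /=.
  move=> _ <-; have -> : liftA setT = setT by apply/setP => -[x|x]; rewrite !inE.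
  exact: isZFT.
case/andP => st pth lst; apply: isZF_step (lift_step st) _; exact: IH.
Qed.

Lemma upperA : Zg sk J <= #|T2| + Zg sk eA.
Proof.
have [S [zS <-]] := Zg_ex sk eA.
apply: leq_trans (Zg_le (lift_ZF zS)) _.
rewrite card_proj addnC; apply: leq_add.
  by apply: max_card.
by apply: subset_leq_card; apply/subsetP => x; rewrite !inE.
Qed.

End Join.

Lemma first_step sk (T : finType) (e : rel T) S : isZF sk e S -> S != setT ->
  exists S1, fstep sk e S S1 /\ isZF sk e S1.
Proof.
case/connectP => -[|S1 p] /=; first by move=> _ <-; rewrite eqxx.
case/andP => st pth lst _; exists S1; split => //; apply/connectP; by exists p.
Qed.

Lemma card_compl (T : finType) (P : pred T) : #|[set b | P b]| + #|[set b | ~~ P b]| = #|T|.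
Proof.
rewrite -(cardsC [set b | P b]); congr (_ + _).
by apply: eq_card => x; rewrite !inE.
Qed.

Lemma set1_of (T : finType) (A : {set T}) a : #|A| = 1 -> a \in A -> A = [set a].
Proof.
move/eqP/cards1P => [z Ez]; rewrite Ez inE => /eqP ->; done.
Qed.

Section Join2.
Variable sk : bool.
Variables (T1 T2 : finType) (eA : rel T1) (eB : rel T2).
Local Notation J := (gjoin eA eB).
Hypotheses (symA : symmetric eA) (irrA : irreflexive eA) (nA : noiso eA).

Lemma proj_ZF (R : {set T1 + T2}) : (forall b, inr b \in R) -> isZF sk J R -> isZF sk eA (projA R).
Proof.
move=> hR /connectP [p]; elim: p R hR => [|R1 p IH] R hR /=.
  move=> _ <-; have -> : projA [set: T1 + T2] = [set: T1] by apply/setP => x; rewrite !inE.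
  exact: isZFT.
case/andP => /fstepP [u [v [h1 h2 h3 h4 ER1]]] pth lst.
case: v h2 h3 ER1 => [a'|b'] h2 h3 ER1; last by rewrite hR in h2.
case: u h1 h3 h4 => [a|b] h1 h3 h4.
- apply: (@isZF_step _ _ _ _ (projA R1)).
  + apply/fstepP; exists a, a'; split.
    * by move: h1; rewrite inE.
    * by rewrite inE.
    * exact: h3.
    * move: h4; rewrite whl.
      have e2 : [set b | inr b \notin R] = set0 by apply/setP=> x; rewrite !inE hR.
      rewrite e2 cards0 addn0 => <-; apply: eq_card => x; rewrite !inE.
      done.
    * by rewrite ER1; apply/setP => x; rewrite !inE.
  + apply: IH pth lst => b; by rewrite ER1 inE hR orbT.
- move: h4; rewrite whr => h4.
  have : 0 < #|[set a | inl a \notin R]| by apply/card_gt0P; exists a'; rewrite inE.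
  move=> pos; have h1' : #|[set a | inl a \notin R]| = 1 by lia.
  have Ez : [set a | inl a \notin R] = [set a'] by apply: set1_of h1' _; rewrite inE.
  have [m ea'm] := nA a'.
  apply: (@one_white sk _ eA _ a' m).
  + move=> x; have := congr1 (fun A : {set T1} => x \in A) Ez; rewrite !inE /= => <-.
    by rewrite negbK.
  + by rewrite symA.
  + by rewrite irrA.
Qed.

Lemma half (S : {set T1 + T2}) : isZF sk J S ->
  (forall b, inr b \in S) \/ (#|[set b | inr b \notin S]| = 1 /\ 2 <= #|[set a | inl a \notin S]|) ->
  #|T2| + Zg sk eA <= #|S|.
Proof.
move=> zS [hb|[h1 h2]].
  have := Zg_le (proj_ZF hb zS); rewrite (card_proj S).
  have -> : projB S = setT by apply/setP => x; rewrite !inE hb.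
  rewrite cardsT; lia.
have [a0 a0S] : exists a, inl a \notin S.
  have /card_gt0P [a] : 0 < #|[set a | inl a \notin S]| by lia.
  by rewrite inE => ?; exists a.
have SnT : S != setT by apply: contraNneq a0S => ->; rewrite inE.
have [S1 [/fstepP [u [v [hu hv huv hw ES1]]] zS1]] := first_step zS SnT.
case: u hu huv hw => [a|b] hu huv hw; last by move: hw; rewrite whr; lia.
move: hw; rewrite whl h1 => hw.
have hA : forall a', eA a a' -> inl a' \in S.
  move=> a' ea; apply: contraTT isT => nS.
  have : 0 < #|[set a' | eA a a' & inl a' \notin S]| by apply/card_gt0P; exists a'; rewrite inE ea.
  lia.
case: v hv huv ES1 => [a'|q] hv huv ES1; first by rewrite hA in hv.
have Eq : [set b | inr b \notin S] = [set q] by apply: set1_of h1 _; rewrite inE.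
have hb1 : forall b, inr b \in S1.
  move=> b; rewrite ES1 !inE; have := congr1 (fun A : {set T2} => b \in A) Eq; rewrite !inE /=.
  case: (eqVneq b q) => [-> _|_ h]; first by rewrite eqxx.
  by apply/orP; right; apply: negbFE.
have zA := proj_ZF hb1 zS1.
have E1 : projA S1 = projA S by apply/setP => x; rewrite !inE ES1 !inE.
rewrite E1 in zA.
have [y eay] := nA a.
have yS : y \in projA S by rewrite inE hA.
have ay : a != y by apply: contraTneq eay => ->; rewrite irrA.
have zR : isZF sk eA (projA S :\ y).
  apply: (isZF_step (B' := projA S)) zA; apply/fstepP; exists a, y; split => //.
  - by move: hu; rewrite !inE ay.
  - by rewrite !inE eqxx.
  - have -> : [set w | eA a w & w \notin projA S :\ y] = [set y]; last by rewrite cards1.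
    apply/setP => x; rewrite !inE negb_and negbK.
    case: (eqVneq x y) => [->|xy] /=; first by rewrite eay.
    by apply/negbTE; apply/negP => /andP [ex]; rewrite hA.
  - by apply/setP => x; rewrite !inE; case: (eqVneq x y) => [->|] //=; rewrite hA.
have := Zg_le zR; have := cardsD1 y (projA S); rewrite yS.
have := card_compl (fun b => inr b \in S).
have -> : [set b | inr b \in S] = projB S by apply/setP => x; rewrite !inE.
rewrite (card_proj S) h1; lia.
Qed.
End Join2.

Definition sw {T1 T2 : finType} (x : T1 + T2) : T2 + T1 :=
  match x with inl a => inr a | inr b => inl b end.

Lemma swK (T1 T2 : finType) : cancel (@sw T1 T2) (@sw T2 T1).
Proof. by case. Qed.

Lemma sw_hom (T1 T2 : finType) (eA : rel T1) (eB : rel T2) x y :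
  gjoin eB eA (sw x) (sw y) = gjoin eA eB x y.
Proof. by case: x; case: y. Qed.

Lemma card_pre_sw (T1 T2 : finType) (S : {set T2 + T1}) : #|(@sw T1 T2) @^-1: S| = #|S|.
Proof.
by rewrite -(can2_imset_pre _ (@swK T2 T1) (@swK T1 T2)) (card_imset _ (can_inj (@swK T2 T1))).
Qed.

Lemma two_le (T : finType) (x y : T) : x != y -> 2 <= #|T|.
Proof. by move=> xy; have := max_card [set x; y]; rewrite cards2 xy. Qed.

Section Join3.
Variables (T1 T2 : finType) (eA : rel T1) (eB : rel T2).
Local Notation J := (gjoin eA eB).
Hypotheses (symA : symmetric eA) (irrA : irreflexive eA) (nA : noiso eA).
Hypotheses (symB : symmetric eB) (irrB : irreflexive eB) (nB : noiso eB).

Lemma upperB sk : Zg sk J <= #|T1| + Zg sk eB.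
Proof.
have [S [zS eS]] := Zg_ex sk (gjoin eB eA).
apply: leq_trans (upperA sk eB eA); rewrite -eS.
have := iso_ZF (@swK T1 T2) (@swK T2 T1) (@sw_hom T1 T2 eA eB) zS.
by move/Zg_le; rewrite card_pre_sw.
Qed.

Lemma lower sk : minn (#|T2| + Zg sk eA) (#|T1| + Zg sk eB) <= Zg sk J.
Proof.
have [S [zS <-]] := Zg_ex sk J.
rewrite (card_proj S).
set n1 := #|T1|. set n2 := #|T2|.
set wa := #|[set a | inl a \notin S]|.
set wb := #|[set b | inr b \notin S]|.
have h1 : #|projA S| + wa = n1 := card_compl (fun a => inl a \in S).
have h2 : #|projB S| + wb = n2 := card_compl (fun b => inr b \in S).
have swS : isZF sk (gjoin eB eA) ((@sw T2 T1) @^-1: S).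
  exact: (@iso_ZF sk _ _ (gjoin eB eA) J (@sw T2 T1) (@sw T1 T2) (@swK T2 T1) (@swK T1 T2) (@sw_hom T2 T1 eB eA) S zS).
have csw : #|(@sw T2 T1) @^-1: S| = #|S| by rewrite card_pre_sw.
have wa' : #|[set a | inr a \notin (@sw T2 T1) @^-1: S]| = wa.
  by apply: eq_card => x; rewrite !inE.
have wb' : #|[set b | inl b \notin (@sw T2 T1) @^-1: S]| = wb.
  by apply: eq_card => x; rewrite !inE.
have hbS : wb = 0 -> forall b, inr b \in S.
  move=> h b; apply: contraTT isT => nb.
  have : 0 < wb by apply/card_gt0P; exists b; rewrite inE.
  by rewrite h.
have haS : wa = 0 -> forall a, inr a \in (@sw T2 T1) @^-1: S.
  move=> h a; rewrite inE /=; apply: contraTT isT => nb.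
  have : 0 < wa by apply/card_gt0P; exists a; rewrite inE.
  by rewrite h.
have : (wb = 0 \/ (wb = 1 /\ 2 <= wa)) \/ (wa = 0 \/ (wa = 1 /\ 2 <= wb)) \/
          (wa = 1 /\ wb = 1) \/ (2 <= wa /\ 2 <= wb) by clearbody wa wb; lia.
case=> [[h|h]|[[h|h]|[[ha hb]|[ha hb]]]].
- apply: leq_trans (geq_minl _ _) _; rewrite -card_proj.
  exact: (half symA irrA nA zS (or_introl (hbS h))).
- apply: leq_trans (geq_minl _ _) _; rewrite -card_proj.
  exact: (half symA irrA nA zS (or_intror h)).
- apply: leq_trans (geq_minr _ _) _; rewrite -card_proj -csw.
  by apply: (half symB irrB nB swS); left; apply: haS.
- apply: leq_trans (geq_minr _ _) _; rewrite -card_proj -csw.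
  by apply: (half symB irrB nB swS); right; rewrite wa' wb'.
-
  have [p pS] : exists p, inl p \notin S.
    have /card_gt0P [p] : 0 < wa by rewrite ha.
    by rewrite inE => ?; exists p.
  have [q qS] : exists q, inr q \notin S.
    have /card_gt0P [q] : 0 < wb by rewrite hb.
    by rewrite inE => ?; exists q.
  have [m epm] := nA p; have pm : p != m by apply: contraTneq epm => ->; rewrite irrA.
  have [m' eqm] := nB q; have qm : q != m' by apply: contraTneq eqm => ->; rewrite irrB.
  have c1 : 2 <= n1 := two_le pm.
  have c2 : 2 <= n2 := two_le qm.
  clear swS; case: sk zS => zS.
  + have z2 : Zg true eA <= n1 - 2 := Zle2_sk symA irrA epm.
    clearbody wa wb n1 n2; clear -h1 h2 ha hb c1 c2 z2; lia.
  + have SnT : S != setT by apply: contraNneq pS => ->; rewrite inE.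
    have [S1 [/fstepP [u [v [hu hv huv hw ES1]]] _]] := first_step zS SnT.
    case: u hu huv hw => [x|y] /= hu huv hw.
    * have hw2 : #|[set a' | eA x a' & inl a' \notin S]| + wb = 1
        := etrans (esym (whl eA eB x S)) hw.
      move: hw2; rewrite hb addn1 => -[{}hw].
      have hX : [set a' | eA x a' & inl a' \notin S] = set0.
        by apply/eqP; rewrite -cards_eq0 hw.
      have nxp : ~~ eA x p.
        apply/negP => exp.
        have : p \in [set a' | eA x a' & inl a' \notin S] by rewrite inE exp pS.
        by rewrite hX inE.
      have xp : x != p by apply: contraNneq pS => <-.
      have z2 : Zg false eA <= n1 - 2 := Zle2_blue false symA irrA nA xp nxp epm.
      clearbody wa wb n1 n2; clear -h1 h2 ha hb c1 c2 z2; lia.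
    * have hw2 : wa + #|[set b' | eB y b' & inr b' \notin S]| = 1
        := etrans (esym (whr eA eB y S)) hw.
      move: hw2; rewrite ha add1n => -[{}hw].
      have hX : [set b' | eB y b' & inr b' \notin S] = set0.
        by apply/eqP; rewrite -cards_eq0 hw.
      have nyq : ~~ eB y q.
        apply/negP => eyq.
        have : q \in [set b' | eB y b' & inr b' \notin S] by rewrite inE eyq qS.
        by rewrite hX inE.
      have yq : y != q by apply: contraNneq qS => <-.
      have z2 : Zg false eB <= n2 - 2 := Zle2_blue false symB irrB nB yq nyq eqm.
      clearbody wa wb n1 n2; clear -h1 h2 ha hb c1 c2 z2; lia.
- have [p pS] : exists p, inl p \notin S.
    have /card_gt0P [p] : 0 < wa by apply: leq_trans ha.
    by rewrite inE => ?; exists p.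
  have SnT : S != setT by apply: contraNneq pS => ->; rewrite inE.
  have [S1 [/fstepP [u [v [hu hv huv hw ES1]]] _]] := first_step zS SnT.
  case: u hu huv hw => [x|y] /= hu huv hw.
  + have hw2 : #|[set a' | eA x a' & inl a' \notin S]| + wb = 1
      := etrans (esym (whl eA eB x S)) hw.
    clearbody wa wb n1 n2; clear -hw2 hb; lia.
  + have hw2 : wa + #|[set b' | eB y b' & inr b' \notin S]| = 1
      := etrans (esym (whr eA eB y S)) hw.
    clearbody wa wb n1 n2; clear -hw2 ha; lia.
Qed.

Lemma Zjoin sk : Zg sk J = minn (#|T2| + Zg sk eA) (#|T1| + Zg sk eB).
Proof.
apply/eqP; rewrite eqn_leq lower andbT leq_min.
by rewrite upperA upperB.
Qed.
End Join3.

Section Iter.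
Variables (T : finType) (e : rel T).
Hypotheses (sy : symmetric e) (ir : irreflexive e) (ni : noiso e).

Lemma iter_props k : [/\ symmetric (iter_join e k), irreflexive (iter_join e k) & noiso (iter_join e k)].
Proof.
elim: k => [|k [sk ik nk]] //=; split.
- by move=> [x|x] [y|y] //=; rewrite ?sk ?sy.
- by move=> [x|x] //=; rewrite ?ik ?ir.
- move=> [x|x].
    by have [y hy] := nk x; exists (inl y).
  by have [y hy] := ni x; exists (inr y).
Qed.

Lemma card_vtype k : #|vtype T k| = k.+1 * #|T|.
Proof.
elim: k => [|k IH] /=; first by rewrite mul1n.
by rewrite card_sum IH mulSn addnC.
Qed.

Lemma Z_iter sk k : Zg sk (iter_join e k) = k * #|T| + Zg sk e.
Proof.
elim: k => [|k IH] //=.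
have [sk' ik' nk'] := iter_props k.
have hJ : Zg sk (gjoin (iter_join e k) e) =
   minn (#|T| + Zg sk (iter_join e k)) (#|vtype T k| + Zg sk e)
  := Zjoin sk' ik' nk' sy ir ni sk.
have hc : #|vtype T k| = k.+1 * #|T| := card_vtype k.
rewrite hJ IH hc mulSn.
by rewrite addnA minnn.
Qed.
End Iter.

Module Spec.
Import Order.TTheory GRing.Theory Num.Theory.
Local Open Scope ring_scope.

Lemma char_poly_cast (R : comNzRingType) m n (eq : m = n) (M : 'M[R]_m) :
  char_poly (castmx (eq, eq) M) = char_poly M.
Proof. by case: n / eq; rewrite castmx_id. Qed.

Lemma horner_char (R : comNzRingType) n (A : 'M[R]_n) x : (char_poly A).[x] = \det (x%:M - A).
Proof.
change (horner_eval x (\det (char_poly_mx A)) = \det (x%:M - A)).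
rewrite -det_map_mx; congr (\det _).
apply/matrixP => i j; rewrite !mxE /= ?horner_evalE.
by case: (i == j); rewrite ?hornerE.
Qed.

Lemma poly_eq_off (p q : {poly algC}) (c : algC) :
  (forall x, x != c -> p.[x] = q.[x]) -> p = q.
Proof.
move=> h; apply/eqP; rewrite -subr_eq0; apply/eqP.
pose rs := [seq c + (i.+1)%:R | i <- iota 0 (size (p - q))].
apply: (@roots_geq_poly_eq0 _ _ rs).
- apply/allP => y /mapP [i _ ->]; rewrite /root hornerD hornerN h ?subrr //.
  by rewrite -subr_eq0 addrC addKr pnatr_eq0.
- rewrite map_inj_uniq ?iota_uniq // => i j /addrI /eqP.
  by rewrite eqr_nat => /eqP [].
- by rewrite size_map size_iota.
Qed.

Section Schur.
Variable F : fieldType.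

Lemma J_mul m n p : (const_mx 1 : 'M[F]_(m, n)) *m (const_mx 1 : 'M[F]_(n, p)) = n%:R *: const_mx 1.
Proof.
apply/matrixP => i j; rewrite !mxE.
under eq_bigr do rewrite !mxE mulr1.
by rewrite sumr_const card_ord mulr1.
Qed.

Lemma schurL n1 n2 (A : 'M[F]_n1) (B : 'M[F]_n2) (a : F) : a != 0 ->
  A *m (const_mx 1 : 'M_(n1, n2)) = a *: const_mx 1 ->
  \det (block_mx A (const_mx 1) (const_mx 1) B) = \det A * \det (B - (n1%:R / a) *: const_mx 1).
Proof.
move=> a0 hA.
set N := block_mx 1%:M ((- a^-1) *: (const_mx 1 : 'M_(n1, n2))) 0 (1%:M : 'M_n2).
have dN : \det N = 1 by rewrite det_ublock !det1 mulr1.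
transitivity (\det (block_mx A (const_mx 1) (const_mx 1) B *m N)).
  by rewrite det_mulmx dN mulr1.
rewrite mulmx_block !mulmx1 !mulmx0 !addr0 -!scalemxAr hA J_mul !scalerA.
rewrite mulNr mulVf // scaleN1r addNr det_lblock; congr (_ * \det _).
by rewrite addrC mulNr scaleNr mulrC.
Qed.

Lemma schurR n1 n2 (A : 'M[F]_n1) (B : 'M[F]_n2) (b : F) : b != 0 ->
  B *m (const_mx 1 : 'M_(n2, n1)) = b *: const_mx 1 ->
  \det (block_mx A (const_mx 1) (const_mx 1) B) = \det (A - (n2%:R / b) *: const_mx 1) * \det B.
Proof.
move=> b0 hB.
set N := block_mx (1%:M : 'M_n1) 0 ((- b^-1) *: (const_mx 1 : 'M_(n2, n1))) (1%:M : 'M_n2).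
have dN : \det N = 1 by rewrite det_lblock !det1 mulr1.
transitivity (\det (block_mx A (const_mx 1) (const_mx 1) B *m N)).
  by rewrite det_mulmx dN mulr1.
rewrite mulmx_block !mulmx1 !mulmx0 ?addr0 ?add0r -!scalemxAr hB J_mul !scalerA.
rewrite !mulNr (mulVf b0) scaleN1r addrN det_ublock; congr (\det _ * _).
by rewrite scaleNr mulrC.
Qed.
End Schur.

Lemma enum_sumE (T1 T2 : finType) :
  enum {: T1 + T2} = [seq inl x | x <- enum T1] ++ [seq inr y | y <- enum T2].
Proof. by rewrite !enumT [in LHS]unlock. Qed.

Section Block.
Variables (T1 T2 : finType).
Local Notation cs := (card_sum T1 T2).

Lemma ev_lshift (a : 'I_#|T1|) :
  enum_val (cast_ord (esym cs) (lshift #|T2| a)) = inl (enum_val a) :> (T1 + T2).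
Proof.
rewrite (enum_val_nth (inl (enum_val a))).
rewrite enum_sumE nth_cat size_map -cardE /= ltn_ord (nth_map (enum_val a)); last by rewrite -cardE.
by congr inl; symmetry; apply: enum_val_nth.
Qed.

Lemma ev_rshift (b : 'I_#|T2|) :
  enum_val (cast_ord (esym cs) (rshift #|T1| b)) = inr (enum_val b) :> (T1 + T2).
Proof.
rewrite (enum_val_nth (inr (enum_val b))) enum_sumE nth_cat size_map -cardE /=.
rewrite ltnNge leq_addr /= addKn (nth_map (enum_val b)); last by rewrite -cardE.
by congr inr; symmetry; apply: enum_val_nth.
Qed.
End Block.

Definition Lf {T : finType} (e : rel T) (u w : T) : algC :=
  (u == w)%:R * (#|[set z | e u z]|)%:R - (e u w)%:R.

Lemma lapE (T : finType) (e : rel T) i j : laplacian e i j = Lf e (enum_val i) (enum_val j).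
Proof. by rewrite mxE /Lf (inj_eq enum_val_inj). Qed.

Lemma lap_J (T : finType) (e : rel T) m : laplacian e *m (const_mx 1 : 'M_(#|T|, m)) = 0.
Proof.
apply/matrixP => i j; rewrite [LHS]mxE [RHS]mxE.
under eq_bigr do rewrite [X in _ * X]mxE mulr1 lapE.
rewrite -(big_enum_val (fun x => Lf e (enum_val i) x)) /=.
rewrite /Lf sumrB (bigD1 (enum_val i)) //= eqxx mul1r big1 ?addr0; last first.
  by move=> y /negbTE; rewrite eq_sym => ->; rewrite mul0r.
apply/eqP; rewrite subr_eq0; apply/eqP; rewrite -natr_sum; congr (_%:R).
rewrite -sum1_card [LHS]big_mkcond [RHS]big_mkcond /=; apply: eq_bigr => x _; rewrite !inE.
by case: (e _ x).
Qed.

Section LapJoin.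
Variables (T1 T2 : finType) (eA : rel T1) (eB : rel T2).
Local Notation cs := (card_sum T1 T2).

Lemma degL a : #|[set z | gjoin eA eB (inl a) z]| = (#|[set z | eA a z]| + #|T2|)%N.
Proof. by rewrite card_sumP /= cardsT. Qed.
Lemma degR b : #|[set z | gjoin eA eB (inr b) z]| = (#|T1| + #|[set z | eB b z]|)%N.
Proof. by rewrite card_sumP /= cardsT. Qed.

Lemma lap_join : laplacian (gjoin eA eB) = castmx (esym cs, esym cs)
  (block_mx (laplacian eA + (#|T2|%:R)%:M) (- const_mx 1) (- const_mx 1) (laplacian eB + (#|T1|%:R)%:M)).
Proof.
apply/matrixP => i j; rewrite castmxE /=.
set k := cast_ord _ i; set l := cast_ord _ j.
have -> : i = cast_ord (esym cs) k by apply: val_inj.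
have -> : j = cast_ord (esym cs) l by apply: val_inj.
rewrite lapE.
case: (splitP k) => [a ha|b hb]; case: (splitP l) => [a' ha'|b' hb'].
- have -> : k = lshift _ a by apply: val_inj.
  have -> : l = lshift _ a' by apply: val_inj.
  have E : (inl (enum_val a) == inl (enum_val a') :> T1 + T2) = (a == a').
    by apply/eqP/eqP => [[/enum_val_inj]|->].
  rewrite !ev_lshift block_mxEul !mxE /Lf /= degL natrD E.
  by case: (a == a'); rewrite /= ?mul1r ?mul0r ?mulr1n ?mulr0n ?addr0 ?sub0r //; rewrite addrAC.
- have -> : k = lshift _ a by apply: val_inj.
  have -> : l = rshift _ b' by apply: val_inj.
  by rewrite ev_lshift ev_rshift block_mxEur !mxE /Lf /= mul0r sub0r.
- have -> : k = rshift _ b by apply: val_inj.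
  have -> : l = lshift _ a' by apply: val_inj.
  by rewrite ev_lshift ev_rshift block_mxEdl !mxE /Lf /= mul0r sub0r.
- have -> : k = rshift _ b by apply: val_inj.
  have -> : l = rshift _ b' by apply: val_inj.
  have E : (inr (enum_val b) == inr (enum_val b') :> T1 + T2) = (b == b').
    by apply/eqP/eqP => [[/enum_val_inj]|->].
  rewrite !ev_rshift block_mxEdr !mxE /Lf /= degR natrD E.
  by case: (b == b'); rewrite /= ?mul1r ?mul0r ?mulr1n ?mulr0n ?addr0 ?sub0r //; rewrite addrC addrA.
Qed.
End LapJoin.

Section CP.
Variables (T1 T2 : finType).

Lemma cp_join_eval (eA : rel T1) (eB : rel T2) x :
  (char_poly (laplacian (gjoin eA eB))).[x] =
  \det (block_mx ((x - #|T2|%:R)%:M - laplacian eA) (const_mx 1) (const_mx 1)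
                 ((x - #|T1|%:R)%:M - laplacian eB)).
Proof.
rewrite lap_join char_poly_cast horner_char; congr (\det _).
rewrite (scalar_mx_block #|T1| #|T2| x) opp_block_mx add_block_mx.
congr block_mx.
- apply/matrixP => i j; rewrite !mxE.
  by case: (i == j); rewrite ?mulr1n ?mulr0n; ring.
- by rewrite sub0r opprK.
- by rewrite sub0r opprK.
- apply/matrixP => i j; rewrite !mxE.
  by case: (i == j); rewrite ?mulr1n ?mulr0n; ring.
Qed.

Lemma shiftJ (T : finType) (e : rel T) m (a : algC) :
  (a%:M - laplacian e) *m (const_mx 1 : 'M_(#|T|, m)) = a *: const_mx 1.
Proof. by rewrite mulmxBl mul_scalar_mx lap_J subr0. Qed.

Lemma cp_joinL (eA eA' : rel T1) (eB : rel T2) :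
  char_poly (laplacian eA) = char_poly (laplacian eA') ->
  char_poly (laplacian (gjoin eA eB)) = char_poly (laplacian (gjoin eA' eB)).
Proof.
move=> h; apply: (@poly_eq_off _ _ (#|T2|%:R)) => x hx.
have a0 : x - #|T2|%:R != 0 by rewrite subr_eq0.
rewrite !cp_join_eval (schurL _ a0 (shiftJ eA _ _)) (schurL _ a0 (shiftJ eA' _ _)).
by rewrite -!horner_char h.
Qed.

Lemma cp_joinR (eA : rel T1) (eB eB' : rel T2) :
  char_poly (laplacian eB) = char_poly (laplacian eB') ->
  char_poly (laplacian (gjoin eA eB)) = char_poly (laplacian (gjoin eA eB')).
Proof.
move=> h; apply: (@poly_eq_off _ _ (#|T1|%:R)) => x hx.
have b0 : x - #|T1|%:R != 0 by rewrite subr_eq0.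
rewrite !cp_join_eval (schurR _ b0 (shiftJ eB _ _)) (schurR _ b0 (shiftJ eB' _ _)).
by rewrite -!horner_char h.
Qed.
End CP.

Lemma monic_mup_eq (p q : {poly algC}) : p \is monic -> q \is monic ->
  (forall x, mup x p = mup x q) -> p = q.
Proof.
move=> mp mq h.
have [r Er] := closed_field_poly_normal p.
have [s Es] := closed_field_poly_normal q.
rewrite (monicP mp) scale1r in Er; rewrite (monicP mq) scale1r in Es.
rewrite Er Es; apply: perm_big; apply/allP => x _ /=; apply/eqP.
by rewrite -!mu_prod_XsubC -Er -Es h.
Qed.

End Spec.
Import Spec.


Lemma noiso_of_conn (T : finType) (e : rel T) :
  connected_graph e -> (forall x : T, exists y, y != x) -> noiso e.
Proof.
move=> c hne x; have [y yx] := hne x.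
have /connectP [p pth ly] := c x y.
case: p pth ly => [|z p] /=; first by move=> _ E; rewrite E eqxx in yx.
by case/andP => exz _ _; exists z.
Qed.

Theorem theorem4p6 (n : nat) (G H : rel 'I_n) :
  simple_graph G -> simple_graph H ->
  connected_graph G -> connected_graph H ->
  lap_spectrum G = lap_spectrum H ->
  (Zf G <> Zf H ->
     forall k : nat, (1 <= k)%N ->
       lap_spectrum (iter_join G k) = lap_spectrum (iter_join H k) /\
       Zf (iter_join G k) <> Zf (iter_join H k)) /\
  (Zskew G <> Zskew H ->
     forall k : nat, (1 <= k)%N ->
       lap_spectrum (iter_join G k) = lap_spectrum (iter_join H k) /\
       Zskew (iter_join G k) <> Zskew (iter_join H k)).
Proof.
move=> [syG irG] [syH irH] cG cH hS.
have cpGH : char_poly (laplacian G) = char_poly (laplacian H).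
  apply: monic_mup_eq; [exact: char_poly_monic | exact: char_poly_monic |] => x.
  by have := congr1 (fun f => f x) hS.
have spec : forall k, char_poly (laplacian (iter_join G k)) = char_poly (laplacian (iter_join H k)).
  elim => [|k IH] //=.
  by rewrite (cp_joinL G IH) (cp_joinR (iter_join H k) cpGH).
have specS k : lap_spectrum (iter_join G k) = lap_spectrum (iter_join H k).
  by rewrite /lap_spectrum spec.
have [n1|n2] := leqP n 1.
  have GH : G = H.
    apply: functional_extensionality => x; apply: functional_extensionality => y.
    have -> : x = y by apply: val_inj => /=; have := ltn_ord x; have := ltn_ord y; lia.
    by rewrite irG irH.
  by rewrite GH; split => // [].
have ne : forall x : 'I_n, exists y, y != x.
  move=> x; have h0 : 0 < n by lia.
  case: (eqVneq x (Ordinal h0)) => [->|hx]; last by exists (Ordinal h0); rewrite eq_sym.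
  by exists (Ordinal n2); apply/eqP => /(congr1 val).
have nG := @noiso_of_conn _ _ cG ne; have nH := @noiso_of_conn _ _ cH ne.
have hZ sk k : Zg sk (iter_join G k) = k * n + Zg sk G /\ Zg sk (iter_join H k) = k * n + Zg sk H.
  by rewrite !Z_iter // card_ord.
split => hne k _; split => //; rewrite ?Zf_Zg ?Zskew_Zg;
  [have [-> ->] := hZ false k | have [-> ->] := hZ true k];
  rewrite ?Zf_Zg ?Zskew_Zg in hne; lia.
Qed.
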